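(* Let $v_1,v_2,\rho_1,\rho_2$ be strictly positive reals, define $V(R)=(\rho_1+\rho_2R)\big(v_1+\frac{v_2}{R}\big)$ for $R>0$, let $R^*=\sqrt{\frac{\rho_1 v_2}{\rho_2 v_1}}$ and $\gamma^*=V(R^* )/V(1)$. Suppose $R^*>1$ and $\alpha^{-1}R^*\le R\le\alpha R^*$ for some $\alpha>1$. Then \[ \frac{V(R)}{V(R^* )}\le\frac12+\frac{\alpha+\alpha^{-1}}{4},\qquad\text{and thus}\qquad \frac{V(R)}{V(1)}\le\Big(\frac12+\frac{\alpha+\alpha^{-1}}{4}\Big)\gamma^*. \]
   Context: Interpretation: for a nested conditional Monte Carlo estimator with $N$ outer paths and $R$ inner replications per path, with variance $\frac{v_1}{N}+\frac{v_2}{RN}$ and expected cost $N\rho_1+NR\rho_2$, at a fixed budget $C$ fully used the variance is $V(R)/C$; $R^*$ is the optimal number of inner replications (when $R^*>1$) and $R=1$ corresponds to simple Monte Carlo. *)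

(* Defs.v *)
From Stdlib Require Import Reals.
Open Scope R_scope.

Definition Vcost (v1 v2 rho1 rho2 r : R) : R :=
  (rho1 + rho2 * r) * (v1 + v2 / r).

Definition Ropt (v1 v2 rho1 rho2 : R) : R :=
  sqrt ((rho1 * v2) / (rho2 * v1)).

Definition gamma_opt (v1 v2 rho1 rho2 : R) : R :=
  Vcost v1 v2 rho1 rho2 (Ropt v1 v2 rho1 rho2) / Vcost v1 v2 rho1 rho2 1.

(* Main.v *)
Require Import Defs.
From Stdlib Require Import Reals Lra Psatz.
Open Scope R_scope.

Lemma Rdiv_le_0_compat (a b : R) : 0 <= a -> 0 < b -> 0 <= a / b.
Proof. intros. unfold Rdiv. apply Rmult_le_pos; [lra|]. left; apply Rinv_0_lt_compat; lra. Qed.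

Lemma key (v1 v2 rho1 rho2 alpha r s : R) :
  0 < v1 -> 0 < v2 -> 0 < rho1 -> 0 < rho2 -> 0 < s ->
  rho2 * v1 * (s * s) = rho1 * v2 -> 1 < alpha ->
  s <= alpha * r -> r <= alpha * s ->
  Vcost v1 v2 rho1 rho2 r / Vcost v1 v2 rho1 rho2 s
    <= 1 / 2 + (alpha + / alpha) / 4.
Proof.
  intros h1 h2 h3 h4 hs hss ha hr1 hr2.
  assert (hr : 0 < r) by nra.
  unfold Vcost.
  set (c := rho2 * v1 * s).
  assert (hc : 0 < c) by (unfold c; apply Rmult_lt_0_compat; nra).
  assert (E1 : (rho1 + rho2 * r) * (v1 + v2 / r) = rho1*v1 + rho2*v2 + c * (s/r + r/s)).
  { unfold c. assert (V2 : v2 = rho2 * v1 * (s*s) / rho1) by (rewrite hss; field; lra).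
    rewrite V2. field. lra. }
  assert (E2 : (rho1 + rho2 * s) * (v1 + v2 / s) = rho1*v1 + rho2*v2 + 2*c).
  { unfold c. assert (V2 : v2 = rho2 * v1 * (s*s) / rho1) by (rewrite hss; field; lra).
    rewrite V2. field. lra. }
  rewrite E1, E2.
  set (A := rho1*v1 + rho2*v2).
  assert (hA : 2*c <= A).
  { assert (Hcc : c*c = rho1*v1*(rho2*v2)).
    { unfold c. replace (rho2 * v1 * s * (rho2 * v1 * s)) with (rho2*v1*(rho2*v1*(s*s))) by ring.
      rewrite hss. ring. }
    assert (HA2 : A*A - 4*(c*c) = (rho1*v1 - rho2*v2)*(rho1*v1 - rho2*v2)) by (unfold A; rewrite Hcc; ring).
    assert (0 < A) by (unfold A; nra).
    destruct (Rle_lt_dec (2*c) A) as [Hq|Hq]; [exact Hq|].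
    assert (A*A < (2*c)*(2*c)) by (apply Rmult_le_0_lt_compat; lra).
    assert (0 <= (rho1*v1 - rho2*v2)*(rho1*v1 - rho2*v2)) by apply Rle_0_sqr.
    lra. }
  set (x := s/r + r/s).
  assert (hx2 : 2 <= x).
  { unfold x. assert (s/r + r/s - 2 = (s - r)*(s-r)/(r*s)) by (field; lra).
    assert (0 <= (s - r)*(s-r)/(r*s)). { apply Rdiv_le_0_compat; [apply Rle_0_sqr | apply Rmult_lt_0_compat; lra]. } lra. }
  assert (hxa : x <= alpha + /alpha).
  { unfold x. set (t := r/s). assert (ht : 0 < t) by (unfold t; apply Rdiv_lt_0_compat; lra).
    replace (s/r) with (/t) by (unfold t; field; lra).
    assert (t <= alpha) by (unfold t; apply Rmult_le_reg_r with s; [lra|]; field_simplify; lra).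
    assert (/alpha <= t).
    { unfold t. apply Rmult_le_reg_r with (alpha*s); [nra|]. field_simplify; lra. }
    assert (/t + t - (alpha + /alpha) = (t - alpha)*(t - /alpha)/t).
    { field. lra. }
    assert ((t - alpha)*(t - /alpha)/t <= 0).
    { unfold Rdiv. assert (0 < /t) by (apply Rinv_0_lt_compat; lra).
      assert ((t - alpha)*(t - /alpha) <= 0) by nra. nra. }
    lra. }
  apply Rmult_le_reg_r with (A + 2*c); [lra|].
  unfold Rdiv at 1. rewrite Rmult_assoc, Rinv_l, Rmult_1_r by lra.
  nra.
Qed.

Theorem proposition4 (v1 v2 rho1 rho2 alpha r : R) :
  0 < v1 -> 0 < v2 -> 0 < rho1 -> 0 < rho2 ->
  1 < Ropt v1 v2 rho1 rho2 ->
  1 < alpha ->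
  / alpha * Ropt v1 v2 rho1 rho2 <= r <= alpha * Ropt v1 v2 rho1 rho2 ->
  Vcost v1 v2 rho1 rho2 r / Vcost v1 v2 rho1 rho2 (Ropt v1 v2 rho1 rho2)
    <= 1 / 2 + (alpha + / alpha) / 4
  /\
  Vcost v1 v2 rho1 rho2 r / Vcost v1 v2 rho1 rho2 1
    <= (1 / 2 + (alpha + / alpha) / 4) * gamma_opt v1 v2 rho1 rho2.
Proof.
  intros h1 h2 h3 h4 hs ha [hr1 hr2].
  unfold gamma_opt.
  set (s := Ropt v1 v2 rho1 rho2) in *.
  assert (hss : rho2 * v1 * (s * s) = rho1 * v2).
  { unfold s, Ropt. rewrite sqrt_sqrt.
    - field. split; lra.
    - apply Rdiv_le_0_compat; nra. }
  assert (hr1' : s <= alpha * r).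
  { apply Rmult_le_compat_l with (r:=alpha) in hr1; [|lra].
    rewrite <- Rmult_assoc, Rinv_r, Rmult_1_l in hr1 by lra. exact hr1. }
  assert (K := key v1 v2 rho1 rho2 alpha r s h1 h2 h3 h4 ltac:(lra) hss ha hr1' hr2).
  split; [exact K|].
  assert (P1 : 0 < Vcost v1 v2 rho1 rho2 1).
  { unfold Vcost. apply Rmult_lt_0_compat; [nra|]. unfold Rdiv; rewrite Rinv_1; nra. }
  assert (Ps : 0 < Vcost v1 v2 rho1 rho2 s).
  { unfold Vcost. apply Rmult_lt_0_compat; [nra|].
    assert (0 < v2 / s) by (apply Rdiv_lt_0_compat; lra). lra. }
  replace (Vcost v1 v2 rho1 rho2 r / Vcost v1 v2 rho1 rho2 1) with
    (Vcost v1 v2 rho1 rho2 r / Vcost v1 v2 rho1 rho2 s *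
      (Vcost v1 v2 rho1 rho2 s / Vcost v1 v2 rho1 rho2 1)) by (field; lra).
  apply Rmult_le_compat_r; [|exact K].
  apply Rdiv_le_0_compat; lra.
Qed.
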